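(* Let $A$ be a finite-dimensional vector space with multiplications $\succ_A,\prec_A:A\otimes A\to A$, and define $x\circ_A y=x\succ_A y+x\prec_A y$ for all $x,y\in A$. Then the following statements are equivalent: (1) $(A,\succ_A,\prec_A)$ is an anti-pre-Leibniz algebra. (2) The identities (AL2), (AL3), (AL4) hold, together with $$(x\circ_A y)\succ_A z=x\prec_A(y\circ_A z)-y\prec_A(x\circ_A z),\quad\forall x,y,z\in A.$$ (3) $(A,\circ_A)$ is a Leibniz algebra and $(-\mathcal L_{\succ_A},-\mathcal R_{\prec_A},A)$ is a representation of $(A,\circ_A)$. (4) $(A,\circ_A)$ is a Leibniz algebra and $(-\mathcal L^*_{\succ_A},\mathcal L^*_{\succ_A}+\mathcal R^*_{\prec_A},A^* )$ is a representation of $(A,\circ_A)$.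
   Context: All vector spaces are finite-dimensional over a field $\mathbb K$ of characteristic zero. For a multiplication $\ast$ on $A$, $\mathcal L_\ast(x)y=x\ast y$ and $\mathcal R_\ast(x)y=y\ast x$. For a linear map $f:A\to\mathrm{End}(V)$, $f^*:A\to\mathrm{End}(V^* )$ is defined by $\langle f^*(x)u^*,v\rangle=-\langle u^*,f(x)v\rangle$. A Leibniz algebra is a vector space $A$ with a multiplication $\circ_A$ satisfying $x\circ_A(y\circ_A z)=(x\circ_A y)\circ_A z+y\circ_A(x\circ_A z)$ for all $x,y,z$. A representation of a Leibniz algebra $(A,\circ_A)$ is a triple $(l,r,V)$ with $V$ a vector space and linear maps $l,r:A\to\mathrm{End}(V)$ such that for all $x,y\in A,v\in V$: $l(x\circ_A y)v=l(x)l(y)v-l(y)l(x)v$; $r(x\circ_A y)v=l(x)r(y)v-r(y)l(x)v$; $r(y)l(x)v=-r(y)r(x)v$. An anti-pre-Leibniz algebra is a vector space $A$ with multiplications $\succ_A,\prec_A$ such that, with $x\circ_A y=x\succ_A y+x\prec_A y$, for all $x,y,z\in A$: (AL1) $(x\circ_A y)\prec_A z=x\succ_A(y\circ_A z)-y\succ_A(x\circ_A z)$; (AL2) $(x\circ_A y)\succ_A z=y\succ_A(x\succ_A z)-x\succ_A(y\succ_A z)$; (AL3) $x\prec_A(y\circ_A z)=(y\succ_A x)\prec_A z-y\succ_A(x\prec_A z)$; (AL4) $(x\succ_A y)\prec_A z=-(y\prec_A x)\prec_A z$. *)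

(* Defs.v *)
From HB Require Import structures.
From mathcomp Require Import all_boot all_order all_algebra.
Set Implicit Arguments. Unset Strict Implicit. Unset Printing Implicit Defensive.
Import GRing.Theory.
Local Open Scope ring_scope.

Section Defs.
Variables (K : fieldType) (A : vectType K).

Definition bilinear_mul (m : A -> A -> A) : Prop :=
  (forall (a : K) x y z, m (a *: x + y) z = a *: m x z + m y z) /\
  (forall (a : K) x y z, m z (a *: x + y) = a *: m z x + m z y).

Definition circ (succ prec : A -> A -> A) x y := succ x y + prec x y.

Definition is_leibniz (m : A -> A -> A) : Prop :=
  forall x y z, m x (m y z) = m (m x y) z + m y (m x z).

Definition anti_pre_leibniz (succ prec : A -> A -> A) : Prop :=
  let o := circ succ prec in
  (forall x y z, prec (o x y) z = succ x (o y z) - succ y (o x z)) /\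
  (forall x y z, succ (o x y) z = succ y (succ x z) - succ x (succ y z)) /\
  (forall x y z, prec x (o y z) = prec (succ y x) z - succ y (prec x z)) /\
  (forall x y z, prec (succ x y) z = - prec (prec y x) z).

Definition is_rep (V : lmodType K) (m : A -> A -> A) (l r : A -> V -> V) : Prop :=
  (forall x (a : K) u v, l x (a *: u + v) = a *: l x u + l x v) /\
  (forall x (a : K) u v, r x (a *: u + v) = a *: r x u + r x v) /\
  (forall (a : K) x y v, l (a *: x + y) v = a *: l x v + l y v) /\
  (forall (a : K) x y v, r (a *: x + y) v = a *: r x v + r y v) /\
  (forall x y v, l (m x y) v = l x (l y v) - l y (l x v)) /\
  (forall x y v, r (m x y) v = l x (r y v) - r y (l x v)) /\
  (forall x y v, r y (l x v) = - r y (r x v)).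

Definition Lop (m : A -> A -> A) (x : A) : 'End(A) := linfun (m x).
Definition Rop (m : A -> A -> A) (x : A) : 'End(A) := linfun (fun y => m y x).

(* dual action on A^* = 'Hom(A, K^o): <f^*(x) u*, v> = - <u*, f(x) v> *)
Definition dualop (phi : 'End(A)) (u : 'Hom(A, K^o)) : 'Hom(A, K^o) :=
  - (u \o phi)%VF.

End Defs.

(* Main.v *)
Require Import Defs.
From HB Require Import structures.
From mathcomp Require Import all_boot all_order all_algebra.
From mathcomp Require Import ring.
Import GRing.Theory.
Local Open Scope ring_scope.

Set Implicit Arguments. Unset Strict Implicit.
Section S.
Variables (K : fieldType) (A : vectType K).

Lemma sepK (g1 g2 : A) : (forall u : 'Hom(A, K^o), u g1 = u g2) -> g1 = g2.
Proof.
move=> H; apply/eqP; rewrite -subr_eq0; apply/eqP.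
rewrite (coord_vbasis (memvf (g1 - g2))); apply: big1 => i _.
have := H (@linfun _ A (K^o) (coord (vbasis fullv) i)); rewrite !lfunE /= => h.
by rewrite linearB /= h subrr scale0r.
Qed.

Lemma sepC (g1 g2 : A) : (forall i, coord (vbasis fullv) i g1 = coord (vbasis fullv) i g2) -> g1 = g2.
Proof.
move=> H; apply/eqP; rewrite -subr_eq0; apply/eqP.
rewrite (coord_vbasis (memvf (g1 - g2))); apply: big1 => i _.
by rewrite linearB /= H subrr scale0r.
Qed.

Lemma combK (a b k0 k1 k2 k3 k4 k5 k6 c1 d1 c2 d2 c3 d3 c4 d4 c5 d5 c6 d6 : K) :
  k0 != 0 -> c1 = d1 -> c2 = d2 -> c3 = d3 -> c4 = d4 -> c5 = d5 -> c6 = d6 ->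
  k0 * (a - b) = k1 * (c1 - d1) + k2 * (c2 - d2) + k3 * (c3 - d3) + k4 * (c4 - d4)
     + k5 * (c5 - d5) + k6 * (c6 - d6) -> a = b.
Proof.
move=> k0n -> -> -> -> -> -> ; rewrite !subrr !mulr0 !addr0 => /eqP.
by rewrite mulf_eq0 (negbTE k0n) /= subr_eq0 => /eqP.
Qed.

Variable (m : A -> A -> A) (Hm : bilinear_mul m).
Lemma mDl x y z : m (x + y) z = m x z + m y z.
Proof. by have := Hm.1 1 x y z; rewrite !scale1r. Qed.
Lemma mDr x y z : m z (x + y) = m z x + m z y.
Proof. by have := Hm.2 1 x y z; rewrite !scale1r. Qed.
Lemma m0l z : m 0 z = 0.
Proof. by apply: (addrI (m 0 z)); rewrite -mDl !addr0. Qed.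
Lemma m0r z : m z 0 = 0.
Proof. by apply: (addrI (m z 0)); rewrite -mDr !addr0. Qed.
Lemma mNl x z : m (- x) z = - m x z.
Proof. by apply/eqP; rewrite -addr_eq0 -mDl addNr m0l. Qed.
Lemma mNr x z : m z (- x) = - m z x.
Proof. by apply/eqP; rewrite -addr_eq0 -mDr addNr m0r. Qed.
Lemma mZl a x z : m (a *: x) z = a *: m x z.
Proof. by have := Hm.1 a x 0 z; rewrite !addr0 m0l addr0. Qed.
Lemma mZr a x z : m z (a *: x) = a *: m z x.
Proof. by have := Hm.2 a x 0 z; rewrite !addr0 m0r addr0. Qed.

Definition mL x : {linear A -> A} :=
  HB.pack (m x) (GRing.isLinear.Build K A A *:%R (m x) (fun a u v => Hm.2 a u v x)).
Lemma LopE x v : Lop m x v = m x v.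
Proof. exact: (lfunE (mL x) v). Qed.
Definition mR x : {linear A -> A} :=
  HB.pack (fun y => m y x) (GRing.isLinear.Build K A A *:%R (fun y => m y x) (fun a u v => Hm.1 a u v x)).
Lemma RopE x v : Rop m x v = m v x.
Proof. exact: (lfunE (mR x) v). Qed.
End S.
Arguments combK {K a b} k0 k1 k2 k3 k4 k5 k6 {c1 d1 c2 d2 c3 d3 c4 d4 c5 d5 c6 d6}.

Section Main.
Variables (K : fieldType) (A : vectType K) (s p : A -> A -> A).
Hypotheses (Hs : bilinear_mul s) (Hp : bilinear_mul p).

Ltac norm := rewrite /circ ?(mDl Hs, mDr Hs, mNl Hs, mNr Hs, mDl Hp, mDr Hp, mNl Hp, mNr Hp, opprK).

Definition AL1 := forall x y z, p (circ s p x y) z = s x (circ s p y z) - s y (circ s p x z).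
Definition AL2 := forall x y z, s (circ s p x y) z = s y (s x z) - s x (s y z).
Definition AL3 := forall x y z, p x (circ s p y z) = p (s y x) z - s y (p x z).
Definition AL4 := forall x y z, p (s x y) z = - p (p y x) z.
Definition ALE := forall x y z, s (circ s p x y) z = p x (circ s p y z) - p y (circ s p x z).

Tactic Notation "comb" constr(k0) constr(k1) constr(k2) constr(k3) constr(k4) constr(k5) constr(k6) constr(e1) constr(e2) constr(e3) constr(e4) constr(e5) constr(e6) :=
  let u := fresh "u" in
  apply: sepC => u;
  apply: (combK k0 k1 k2 k3 k4 k5 k6 _ (congr1 (coord (vbasis fullv) u) e1) (congr1 (coord (vbasis fullv) u) e2) (congr1 (coord (vbasis fullv) u) e3)
   (congr1 (coord (vbasis fullv) u) e4) (congr1 (coord (vbasis fullv) u) e5) (congr1 (coord (vbasis fullv) u) e6)); try ring.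

Lemma L_E : AL1 -> AL2 -> AL3 -> AL4 -> ALE.
Proof.
move=> h1 h2 h3 h4 x y z.
move: (h1 x y z) (h2 x y z) (h3 x y z) (h3 y x z) (h4 y x z); norm => a1 a2 a3 a3' a4'.
comb (1 : K) (1 : K) (1 : K) ((-1) : K) (1 : K) ((-1) : K) (0 : K) a1 a2 a3 a3' a4' (erefl (0:A)) ; exact: oner_neq0.
Qed.

Lemma L_1 : AL2 -> AL3 -> AL4 -> ALE -> AL1.
Proof.
move=> h2 h3 h4 hE x y z.
move: (hE x y z) (h2 x y z) (h3 x y z) (h3 y x z) (h4 y x z); norm => a1 a2 a3 a3' a4'.
comb (1 : K) (1 : K) ((-1) : K) (1 : K) ((-1) : K) (1 : K) (0 : K) a1 a2 a3 a3' a4' (erefl (0:A)) ; exact: oner_neq0.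
Qed.

Lemma L_Leib : AL1 -> ALE -> is_leibniz (circ s p).
Proof.
move=> h1 hE x y z.
move: (h1 x y z) (hE x y z); norm => a1 aE.
comb (1 : K) ((-1) : K) ((-1) : K) (0 : K) (0 : K) (0 : K) (0 : K) a1 aE (erefl (0:A)) (erefl (0:A)) (erefl (0:A)) (erefl (0:A)) ; exact: oner_neq0.
Qed.

Lemma L_1L (two : (2%:R : K) != 0) : is_leibniz (circ s p) -> AL2 -> AL3 -> AL4 -> AL1.
Proof.
move=> hL h2 h3 h4 x y z.
move: (hL x y z) (h2 x y z) (h3 x y z) (h3 y x z) (h4 y x z); norm => a1 a2 a3 a3' a4'.
comb (2%:R : K) ((-1) : K) ((-1) : K) (1 : K) ((-1) : K) (1 : K) (0 : K) a1 a2 a3 a3' a4' (erefl (0:A)) ; exact: two.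
Qed.
End Main.
Section Rep.
Variables (K : fieldType) (A : vectType K) (s p : A -> A -> A).
Hypotheses (Hs : bilinear_mul s) (Hp : bilinear_mul p).

Ltac norm := rewrite /circ ?(mDl Hs, mDr Hs, mNl Hs, mNr Hs, mDl Hp, mDr Hp, mNl Hp, mNr Hp, opprK).

Tactic Notation "comb" constr(k0) constr(k1) constr(k2) constr(k3) constr(k4) constr(k5) constr(k6) constr(e1) constr(e2) constr(e3) constr(e4) constr(e5) constr(e6) :=
  let u := fresh "u" in
  apply: sepC => u;
  apply: (combK k0 k1 k2 k3 k4 k5 k6 _ (congr1 (coord (vbasis fullv) u) e1) (congr1 (coord (vbasis fullv) u) e2) (congr1 (coord (vbasis fullv) u) e3)
   (congr1 (coord (vbasis fullv) u) e4) (congr1 (coord (vbasis fullv) u) e5) (congr1 (coord (vbasis fullv) u) e6)); try ring.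

Tactic Notation "combR" constr(k0) constr(k1) constr(k2) constr(k3) constr(k4) constr(k5) constr(k6) constr(e1) constr(e2) constr(e3) constr(e4) constr(e5) constr(e6) :=
  apply: (combK k0 k1 k2 k3 k4 k5 k6 _ e1 e2 e3 e4 e5 e6); try ring.

Definition l3 x (v : A) := - s x v.
Definition r3 x (v : A) := - p v x.

Lemma L_rep3 : AL2 s p -> AL3 s p -> AL4 s p -> is_rep (circ s p) l3 r3.
Proof.
rewrite /l3 /r3 => h2 h3 h4; split; [|split; [|split; [|split; [|split; [|split]]]]].
- by move=> x a u v; rewrite Hs.2 opprD scalerN.
- by move=> x a u v; rewrite Hp.1 opprD scalerN.
- by move=> a x y v; rewrite Hs.1 opprD scalerN.
- by move=> a x y v; rewrite Hp.2 opprD scalerN.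
- move=> x y v; move: (h2 x y v); norm => a1.
  comb (1:K) (-1:K) (0:K) (0:K) (0:K) (0:K) (0:K) a1 (erefl (0:A)) (erefl (0:A)) (erefl (0:A)) (erefl (0:A)) (erefl (0:A)); exact: oner_neq0.
- move=> x y v; move: (h3 v x y); norm => a1.
  comb (1:K) (-1:K) (0:K) (0:K) (0:K) (0:K) (0:K) a1 (erefl (0:A)) (erefl (0:A)) (erefl (0:A)) (erefl (0:A)) (erefl (0:A)); exact: oner_neq0.
- move=> x y v; move: (h4 x v y); norm => a1.
  comb (1:K) (1:K) (0:K) (0:K) (0:K) (0:K) (0:K) a1 (erefl (0:A)) (erefl (0:A)) (erefl (0:A)) (erefl (0:A)) (erefl (0:A)); exact: oner_neq0.
Qed.

Lemma L_rep3inv : is_rep (circ s p) l3 r3 -> AL2 s p /\ AL3 s p /\ AL4 s p.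
Proof.
rewrite /l3 /r3 => [[_ [_ [_ [_ [R1 [R2 R3]]]]]]]; split; [|split].
- move=> x y z; move: (R1 x y z); norm => a1.
  comb (1:K) (-1:K) (0:K) (0:K) (0:K) (0:K) (0:K) a1 (erefl (0:A)) (erefl (0:A)) (erefl (0:A)) (erefl (0:A)) (erefl (0:A)); exact: oner_neq0.
- move=> x y z; move: (R2 y z x); norm => a1.
  comb (1:K) (-1:K) (0:K) (0:K) (0:K) (0:K) (0:K) a1 (erefl (0:A)) (erefl (0:A)) (erefl (0:A)) (erefl (0:A)) (erefl (0:A)); exact: oner_neq0.
- move=> x y z; move: (R3 x z y); norm => a1.
  comb (1:K) (1:K) (0:K) (0:K) (0:K) (0:K) (0:K) a1 (erefl (0:A)) (erefl (0:A)) (erefl (0:A)) (erefl (0:A)) (erefl (0:A)); exact: oner_neq0.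
Qed.

Definition l4 x (u : 'Hom(A, K^o)) := - dualop (Lop s x) u.
Definition r4 x (u : 'Hom(A, K^o)) := dualop (Lop s x) u + dualop (Rop p x) u.

Lemma l4E x u v : l4 x u v = u (s x v).
Proof. by rewrite /l4 /dualop opprK comp_lfunE LopE. Qed.
Lemma r4E x u v : r4 x u v = - u (s x v) - u (p v x).
Proof. by rewrite /r4 /dualop add_lfunE !opp_lfunE !comp_lfunE LopE // RopE. Qed.

End Rep.
Section Rep4.
Variables (K : fieldType) (A : vectType K) (s p : A -> A -> A).
Hypotheses (Hs : bilinear_mul s) (Hp : bilinear_mul p).

Ltac norm := rewrite /circ ?(mDl Hs, mDr Hs, mNl Hs, mNr Hs, mDl Hp, mDr Hp, mNl Hp, mNr Hp, opprK).

Tactic Notation "combR" constr(k0) constr(k1) constr(k2) constr(k3) constr(k4) constr(k5) constr(k6) constr(e1) constr(e2) constr(e3) constr(e4) constr(e5) constr(e6) :=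
  apply: (combK k0 k1 k2 k3 k4 k5 k6 _ e1 e2 e3 e4 e5 e6); try ring.

Lemma scaleoE (a : K) (b : K^o) : a *: b = (a : K^o) * b. Proof. by []. Qed.
Ltac ev := rewrite ?(l4E Hs, r4E Hs Hp, add_lfunE, opp_lfunE, scale_lfunE, scaleoE).

Lemma L_rep4 : AL2 s p -> AL3 s p -> AL4 s p -> is_rep (circ s p) (l4 s) (r4 s p).
Proof.
move=> h2 h3 h4; split; [|split; [|split; [|split; [|split; [|split]]]]].
- move=> x a u w; apply/lfunP => v; ev.
  ring.
- move=> x a u w; apply/lfunP => v; ev.
  ring.
- move=> a x y u; apply/lfunP => v; ev. rewrite Hs.1 linearD linearZ /= scaleoE. ring.
- move=> a x y u; apply/lfunP => v; ev. rewrite Hs.1 Hp.2 !linearD !linearZ /= !scaleoE. ring.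
- move=> x y u; apply/lfunP => v; ev; norm.
  move: (h2 x y v); norm => a1.
  combR (1:K^o) (1:K^o) (0:K^o) (0:K^o) (0:K^o) (0:K^o) (0:K^o) (congr1 u a1) (erefl (0:K^o)) (erefl (0:K^o)) (erefl (0:K^o)) (erefl (0:K^o)) (erefl (0:K^o)); exact: oner_neq0.
- move=> x y u; apply/lfunP => v; ev; norm.
  move: (h2 x y v) (h3 v x y); norm => a1 a2.
  combR (1:K^o) (-1:K^o) (-1:K^o) (0:K^o) (0:K^o) (0:K^o) (0:K^o) (congr1 u a1) (congr1 u a2) (erefl (0:K^o)) (erefl (0:K^o)) (erefl (0:K^o)) (erefl (0:K^o)); exact: oner_neq0.
- move=> x y u; apply/lfunP => v; ev; norm.
  move: (h4 y v x); norm => a1.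
  combR (1:K^o) (1:K^o) (0:K^o) (0:K^o) (0:K^o) (0:K^o) (0:K^o) (congr1 u a1) (erefl (0:K^o)) (erefl (0:K^o)) (erefl (0:K^o)) (erefl (0:K^o)) (erefl (0:K^o)); exact: oner_neq0.
Qed.

Lemma L_rep4inv : is_rep (circ s p) (l4 s) (r4 s p) -> AL2 s p /\ AL3 s p /\ AL4 s p.
Proof.
move=> [_ [_ [_ [_ [R1 [R2 R3]]]]]].
have h2 : AL2 s p.
  move=> x y z; norm; apply: sepK => u.
  have := congr1 (fun f : 'Hom(A, K^o) => f z) (R1 x y u); rewrite /=; ev; norm => a1.
  combR (1:K^o) (1:K^o) (0:K^o) (0:K^o) (0:K^o) (0:K^o) (0:K^o) a1 (erefl (0:K^o)) (erefl (0:K^o)) (erefl (0:K^o)) (erefl (0:K^o)) (erefl (0:K^o)); exact: oner_neq0.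
split => //; split.
- move=> x y z; norm; apply: sepK => u.
  have := congr1 (fun f : 'Hom(A, K^o) => f x) (R2 y z u); rewrite /=; ev; norm => a1.
  move: (h2 y z x); norm => a2.
  combR (1:K^o) (-1:K^o) (-1:K^o) (0:K^o) (0:K^o) (0:K^o) (0:K^o) a1 (congr1 u a2) (erefl (0:K^o)) (erefl (0:K^o)) (erefl (0:K^o)) (erefl (0:K^o)); exact: oner_neq0.
- move=> x y z; norm; apply: sepK => u.
  have := congr1 (fun f : 'Hom(A, K^o) => f y) (R3 z x u); rewrite /=; ev; norm => a1.
  combR (1:K^o) (1:K^o) (0:K^o) (0:K^o) (0:K^o) (0:K^o) (0:K^o) a1 (erefl (0:K^o)) (erefl (0:K^o)) (erefl (0:K^o)) (erefl (0:K^o)) (erefl (0:K^o)); exact: oner_neq0.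
Qed.
End Rep4.
Theorem proposition2p6 (K : fieldType) (charK : [pchar K] =i pred0)
  (A : vectType K) (succ prec : A -> A -> A)
  (Hsucc : bilinear_mul succ) (Hprec : bilinear_mul prec) :
  let o := circ succ prec in
  [<-> (* (1) *) anti_pre_leibniz succ prec;
       (* (2) *) (forall x y z, succ (o x y) z = succ y (succ x z) - succ x (succ y z)) /\
                 (forall x y z, prec x (o y z) = prec (succ y x) z - succ y (prec x z)) /\
                 (forall x y z, prec (succ x y) z = - prec (prec y x) z) /\
                 (forall x y z, succ (o x y) z = prec x (o y z) - prec y (o x z));
       (* (3) *) is_leibniz o /\
                 is_rep o (fun x (v : A) => - succ x v) (fun x v => - prec v x);
       (* (4) *) is_leibniz o /\
                 is_rep o
                   (fun x (u : 'Hom(A, K^o)) => - dualop (Lop succ x) u)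
                   (fun x u => dualop (Lop succ x) u + dualop (Rop prec x) u)].
Proof.
move=> o.
have two : (2%:R : K) != 0.
  by have := charK 2; rewrite !inE /= => /negbT.
tfae.
- move=> [h1 [h2 [h3 h4]]]; split; [exact: h2|split; [exact: h3|split; [exact: h4|]]].
  exact: (L_E Hsucc Hprec h1 h2 h3 h4).
- move=> [h2 [h3 [h4 hE]]].
  have h1 := L_1 Hsucc Hprec h2 h3 h4 hE.
  split; [exact: (L_Leib Hsucc Hprec h1 hE) | exact: (L_rep3 Hsucc Hprec h2 h3 h4)].
- move=> [hL hR]; have [h2 [h3 h4]] := L_rep3inv Hsucc Hprec hR.
  split => //; exact: (L_rep4 Hsucc Hprec h2 h3 h4).
- move=> [hL hR]; have [h2 [h3 h4]] := L_rep4inv Hsucc Hprec hR.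
  have h1 := L_1L Hsucc Hprec two hL h2 h3 h4.
  by split; [|split; [|split]].
Qed.
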